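(* Let $F:\mathbb{R}^p\to[0,M]$ and $\mathbf{r}=(\mathbf{r}_1,\dots,\mathbf{r}_Z):\mathbb{R}^p\to\mathbb{R}^Z$ be functions, let $B>0$, and let $\Lambda=\{\boldsymbol{\lambda}\in\mathbb{R}_+^{Z}:\|\boldsymbol{\lambda}\|_1\le B\}$. Define $G(w;\boldsymbol{\lambda})=F(w)+\boldsymbol{\lambda}^T\mathbf{r}(w)$ for $w\in\mathbb{R}^p$, $\boldsymbol{\lambda}\in\Lambda$. Let $\nu\ge 0$ and let $(\bar w,\bar{\boldsymbol{\lambda}})\in\mathbb{R}^p\times\Lambda$ be a $\nu$-approximate saddle point of $G$, i.e. $G(\bar w;\bar{\boldsymbol{\lambda}})\le G(w;\bar{\boldsymbol{\lambda}})+\nu$ for all $w\in\mathbb{R}^p$ and $G(\bar w;\bar{\boldsymbol{\lambda}})\ge G(\bar w;\boldsymbol{\lambda})-\nu$ for all $\boldsymbol{\lambda}\in\Lambda$. Assume there exists $w^*\in\mathbb{R}^p$ with $\mathbf{r}(w^* )\le \mathbf{0}_Z$ componentwise. Then $$\max_{1\le j\le Z}\,(\mathbf{r}_j(\bar w))_+\le \frac{M+2\nu}{B},$$ where $x_+=\max\{x,0\}$.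
   Context: In the paper, $F(w)=\frac1K\sum_{k=1}^K\frac1{m_k}\sum_{i=1}^{m_k} l(h_w(x_{k,i}),y_{k,i})$ is the empirical federated risk of a model with parameter $w$ (a nonnegative loss, assumed bounded by $M$), and $\mathbf{r}(w)\le 0$ encodes group-fairness constraints such as Bounded Group Loss; the Lagrangian-type objective is minimized over $w$ and maximized over $\boldsymbol{\lambda}$. *)

(* Defs.v *)
From mathcomp Require Import all_boot all_order all_algebra.
Set Implicit Arguments. Unset Strict Implicit. Unset Printing Implicit Defensive.
Import Order.TTheory GRing.Theory Num.Theory.
Local Open Scope ring_scope.

Definition in_Lambda (R : realFieldType) (Z : nat) (B : R) (lam : 'I_Z -> R) : Prop :=
  (forall j, 0 <= lam j) /\ \sum_(j < Z) `|lam j| <= B.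

Definition Gfun (R : realFieldType) (W : Type) (Z : nat)
  (F : W -> R) (r : W -> 'I_Z -> R) (w : W) (lam : 'I_Z -> R) : R :=
  F w + \sum_(j < Z) lam j * r w j.

Definition pos_part (R : realFieldType) (x : R) : R := Num.max x 0.

(* Main.v *)
Require Import Defs.
From mathcomp Require Import all_boot all_order all_algebra.
From mathcomp Require Import lra.
Import Order.TTheory GRing.Theory Num.Theory.
Local Open Scope ring_scope.

Theorem lemma1 (R : realFieldType) (p Z : nat) (M B nu : R)
  (F : 'rV[R]_p -> R) (r : 'rV[R]_p -> 'I_Z -> R)
  (hF : forall w, 0 <= F w <= M)
  (hB : 0 < B) (hnu : 0 <= nu)
  (wbar : 'rV[R]_p) (lbar : 'I_Z -> R)
  (hlbar : in_Lambda B lbar)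
  (hsad1 : forall w, Gfun F r wbar lbar <= Gfun F r w lbar + nu)
  (hsad2 : forall lam, in_Lambda B lam -> Gfun F r wbar lbar >= Gfun F r wbar lam - nu)
  (hfeas : exists wstar : 'rV[R]_p, forall j, r wstar j <= 0) :
  \big[Num.max/0]_(j < Z) pos_part (r wbar j) <= (M + 2 * nu) / B.
Proof.
have hM : 0 <= M by have /andP[h1 h2] := hF wbar; exact: le_trans h1 h2.
have hR : 0 <= (M + 2 * nu) / B by apply: divr_ge0; lra.
case: hfeas => ws hws.
have hup : Gfun F r wbar lbar <= M + nu.
  apply: (le_trans (hsad1 ws)); rewrite /Gfun.
  have hs : \sum_(j < Z) lbar j * r ws j <= 0.
    rewrite -oppr_ge0 -sumrN; apply: sumr_ge0 => i _; rewrite oppr_ge0; apply: mulr_ge0_le0; [exact: hlbar.1 | exact: hws].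
  have /andP[_ h2] := hF ws; lra.
apply: (big_ind (fun x => x <= (M + 2 * nu) / B)) => //.
  by move=> x y hx hy; rewrite ge_max hx hy.
move=> j _; rewrite /pos_part ge_max hR andbT.
case: (lerP (r wbar j) 0) => hj; first exact: le_trans hj hR.
pose lam := fun i : 'I_Z => if i == j then B else 0.
have hlam : in_Lambda B lam.
  rewrite /in_Lambda; split; first by move=> i; rewrite /lam; case: ifP => // _; exact: ltW.
  rewrite (bigD1 j) //= big1 => [|i /negbTE hi]; last by rewrite /lam hi normr0.
  by rewrite /lam eqxx addr0 ger0_norm // ltW.
have := hsad2 _ hlam; rewrite /Gfun.
rewrite (bigD1 j) //= big1 => [|i /negbTE hi]; last by rewrite /lam hi mul0r.
rewrite /lam eqxx addr0 => h.
rewrite ler_pdivlMr //.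
have /andP[h1 _] := hF wbar.
move: hup; rewrite /Gfun => hup; nra.
Qed.
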